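(* Assume the setting described in the context and that the joint distribution of $(X,\mathcal X_n)$ is absolutely continuous with respect to Lebesgue measure on $\mathbb R^{n+1}$. Consider the conditions: (i) $\Lambda$ (respectively $\Lambda_g$) is compact in $\mathbb R^n$; (ii) the copula diagonal $C_{X,\widehat X_\lambda}(x,x)$ of $(X,\widehat X_\lambda)$ is continuous in $\lambda$ on $\Lambda$ (respectively $\Lambda_g$), uniformly with respect to $x\in[0,1]$; (iii) for each $\lambda\in\Lambda$, $\widehat X_\lambda$ has an absolutely continuous distribution with density $p_{\widehat X_\lambda}$, and the map $\lambda\mapsto p_{\widehat X_\lambda}$ from $\Lambda$ to $L^1(\mathbb R)$ is continuous with respect to the $L^1$-norm. If (i) and (ii) hold (for $\Lambda_g$), then problem (P1) has a solution. If (i)–(iii) hold (for $\Lambda$), then problems (P2) and (P3) have solutions.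
   Context: Let $X$ be a real random variable whose c.d.f. $F_X$ is continuous and strictly increasing on the support of $X$, and let $\mathcal X_n=(X_1,\dots,X_n)$ be a random vector on the same probability space. Let $\Lambda\subseteq\mathbb R^n$ and let $g:\Lambda\times\mathbb R^n\to\mathbb R$ be continuous (hence measurable); set $\widehat X_\lambda:=g(\lambda,\mathcal X_n)$, $\lambda\in\Lambda$, and $\Lambda_g:=\{\lambda\in\Lambda: F_X(\widehat X_\lambda)\text{ is uniformly distributed on }(0,1)\}$. Fix $\gamma>0$ and put $Y_1^\lambda:=F_X(\widehat X_\lambda)$ with c.d.f. $F_{Y_1^\lambda}$. The problems are: (P1) minimize $\mathbf E F_X(X\vee\widehat X_\lambda)$ over $\lambda\in\Lambda_g$; (P2) minimize $2\,\mathbf E F_X(X\vee\widehat X_\lambda)-\mathbf E F_X(\widehat X_\lambda)$ over $\lambda\in\Lambda$; (P3) minimize $2\,\mathbf E F_X(X\vee\widehat X_\lambda)-\mathbf E F_X(\widehat X_\lambda)+\gamma\int_0^1F_{Y_1^\lambda}(y)\big[F_{Y_1^\lambda}(y)-2y\big]dy$ over $\lambda\in\Lambda$. Here $a\vee b=\max\{a,b\}$. *)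

(* Defs.v *)
From HB Require Import structures.
From mathcomp Require Import all_boot all_order all_algebra.
From mathcomp Require Import all_classical all_reals all_analysis.
Set Implicit Arguments. Unset Strict Implicit. Unset Printing Implicit Defensive.
Import Order.TTheory GRing.Theory Num.Theory.
Import numFieldNormedType.Exports.
Local Open Scope classical_set_scope.
Local Open Scope ring_scope.

Section Defs.
Context {d : measure_display} {T : measurableType d} {R : realType}
  (P : probability T R).

Definition FX (X : {RV P >-> R}) (x : R) : R := fine (cdf X x).

Definition cdfR (Y : T -> R) (y : R) : R := fine (P [set t | Y t <= y]).

Definition support_of (Y : T -> R) : set R :=
  [set x | forall e : R, 0 < e -> (0 < P [set t | (`|Y t - x| < e)%R])%E].

Definition vecX n (Xs : 'I_n -> {RV P >-> R}) (t : T) : 'rV[R]_n :=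
  \row_i Xs i t.

Definition jointX (X : {RV P >-> R}) n (Xs : 'I_n -> {RV P >-> R})
    (t : T) : 'rV[R]_(1 + n) :=
  row_mx (\row_(i < 1) X t) (vecX Xs t).

Definition Xhat n (g : 'rV[R]_n -> 'rV[R]_n -> R) (Xs : 'I_n -> {RV P >-> R})
    (l : 'rV[R]_n) (t : T) : R := g l (vecX Xs t).

Definition uniform01 (Y : T -> R) : Prop :=
  forall A : set R, measurable A ->
    P (Y @^-1` A) = lebesgue_measure (A `&` `]0%R, 1%R[).

Definition Lambda_g (X : {RV P >-> R}) n (Xs : 'I_n -> {RV P >-> R})
    (Lam : set 'rV[R]_n) (g : 'rV[R]_n -> 'rV[R]_n -> R) : set 'rV[R]_n :=
  [set l | Lam l /\ uniform01 (fun t => FX X (Xhat g Xs l t))].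

(* diagonal C_{X,Y}(x,x) of the copula of (X,Y), i.e. the joint c.d.f. of
   (F_X(X), F_Y(Y)) at (x,x) *)
Definition copula_diag (X : {RV P >-> R}) (Y : T -> R) (x : R) : R :=
  fine (P [set t | FX X (X t) <= x /\ cdfR Y (Y t) <= x]).

Definition diag_unif_cont (X : {RV P >-> R}) n (Xs : 'I_n -> {RV P >-> R})
    (g : 'rV[R]_n -> 'rV[R]_n -> R) (S : set 'rV[R]_n) : Prop :=
  forall l0, S l0 -> forall e : R, 0 < e ->
    exists2 delta : R, 0 < delta &
      forall l, S l -> `|l - l0| < delta ->
        forall x : R, 0 <= x <= 1 ->
          `|copula_diag X (Xhat g Xs l) x - copula_diag X (Xhat g Xs l0) x| < e.

Definition is_density (Y : T -> R) (f : R -> R) : Prop :=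
  (forall y, 0 <= f y) /\ measurable_fun setT f /\
  forall A : set R, measurable A ->
    P (Y @^-1` A) = (\int[lebesgue_measure]_(y in A) (f y)%:E)%E.

Definition J1 (X : {RV P >-> R}) n (Xs : 'I_n -> {RV P >-> R})
    (g : 'rV[R]_n -> 'rV[R]_n -> R) (l : 'rV[R]_n) : \bar R :=
  'E_P[fun t => FX X (Num.max (X t) (Xhat g Xs l t))].

Definition J0 (X : {RV P >-> R}) n (Xs : 'I_n -> {RV P >-> R})
    (g : 'rV[R]_n -> 'rV[R]_n -> R) (l : 'rV[R]_n) : \bar R :=
  'E_P[fun t => FX X (Xhat g Xs l t)].

Definition J2 (X : {RV P >-> R}) n (Xs : 'I_n -> {RV P >-> R})
    (g : 'rV[R]_n -> 'rV[R]_n -> R) (l : 'rV[R]_n) : \bar R :=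
  (2%:E * J1 X Xs g l - J0 X Xs g l)%E.

Definition FY1 (X : {RV P >-> R}) n (Xs : 'I_n -> {RV P >-> R})
    (g : 'rV[R]_n -> 'rV[R]_n -> R) (l : 'rV[R]_n) : R -> R :=
  cdfR (fun t => FX X (Xhat g Xs l t)).

Definition J3 (gamma : R) (X : {RV P >-> R}) n (Xs : 'I_n -> {RV P >-> R})
    (g : 'rV[R]_n -> 'rV[R]_n -> R) (l : 'rV[R]_n) : \bar R :=
  (J2 X Xs g l + gamma%:E *
     \int[lebesgue_measure]_(y in `[0%R, 1%R])
        (FY1 X Xs g l y * (FY1 X Xs g l y - 2 * y))%:E)%E.

End Defs.

Definition box {R : realType} m (a b : 'rV[R]_m) : set 'rV[R]_m :=
  [set v | forall i, a 0 i < v 0 i < b 0 i].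

Definition box_vol {R : realType} m (a b : 'rV[R]_m) : R :=
  \prod_(i < m) Num.max (b 0 i - a 0 i) 0.

Definition leb_null {R : realType} m (A : set 'rV[R]_m) : Prop :=
  forall e : R, 0 < e -> exists a b : nat -> 'rV[R]_m,
    A `<=` \bigcup_k box (a k) (b k) /\
    (\sum_(0 <= k <oo) (box_vol (a k) (b k))%:E < e%:E)%E.

Definition abs_cont_law {d} {T : measurableType d} {R : realType}
    (P : probability T R) m (Z : T -> 'rV[R]_m) : Prop :=
  forall A, leb_null A ->
    exists E : set T, [/\ measurable E, Z @^-1` A `<=` E & P E = 0%E].

(* Main.v *)
Require Import Defs.
From HB Require Import structures.
From mathcomp Require Import all_boot all_order all_algebra.
From mathcomp Require Import all_classical all_reals all_analysis.
From mathcomp Require Import lra.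
Import Order.TTheory GRing.Theory Num.Theory.
Import numFieldNormedType.Exports.
Local Open Scope classical_set_scope.
Local Open Scope ring_scope.
Lemma rV_norm_lt (R : realType) n (v : 'rV[R]_n) r : 0 < r ->
  (forall i, `|v 0 i| < r) -> `|v| < r.
Proof.
move=> r0 h; have -> : `|v| = mx_norm v by []. rewrite mx_normrE.
apply: bigmax_lt => // -[i j] _ /=.
by rewrite (ord1 i); exact: h.
Qed.

Lemma meas_comp_vec d (T : measurableType d) (R : realType) n
  (Z : 'I_n -> T -> R) (h : 'rV[R]_n -> R) :
  (forall i, measurable_fun setT (Z i)) ->
  (forall v0 e, 0 < e -> exists2 r, 0 < r &
     forall v, `|v0 - v| < r -> `|h v0 - h v| < e) ->
  measurable_fun setT (fun t => h (\row_i Z i t)).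
Proof.
move=> mZ hc.
apply: (measurability (@measurable_realfun.RGenOInfty.G R)); first exact: measurable_realfun.RGenOInfty.measurableE.
move=> _ [_ [x ->] <-].
rewrite setTI.
pose U := ({ffun 'I_n -> rat} * {ffun 'I_n -> rat})%type.
pose box (ab : U) := [set v : 'rV[R]_n | forall i,
   ratr (ab.1 i) < v 0 i < ratr (ab.2 i)].
pose F (ab : U) : set T := if pselect (box ab `<=` [set v | x < h v])
  then [set t | forall i, ratr (ab.1 i) < Z i t < ratr (ab.2 i)] else set0.
have -> : (fun t => h (\row_i Z i t)) @^-1` `]x, +oo[ = \bigcup_ab F ab.
  apply/seteqP; split => t /=.
    rewrite in_itv /= andbT => xh.
    set v0 := \row_i Z i t.
    have [r r0 hr] := hc v0 (h v0 - x) ltac:(by rewrite subr_gt0).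
    have ea i : exists q : rat, ratr q \in `](v0 0 i - r), (v0 0 i)[.
      by apply: rat_in_itvoo; rewrite ltrBlDr ltrDl.
    have eb i : exists q : rat, ratr q \in `](v0 0 i), (v0 0 i + r)[.
      by apply: rat_in_itvoo; rewrite ltrDl.
    pose a := [ffun i => projT1 (cid (ea i))].
    pose b := [ffun i => projT1 (cid (eb i))].
    have ha i : ratr (a i) \in `](v0 0 i - r), (v0 0 i)[.
      by rewrite ffunE; exact: (projT2 (cid (ea i))).
    have hb i : ratr (b i) \in `](v0 0 i), (v0 0 i + r)[.
      by rewrite ffunE; exact: (projT2 (cid (eb i))).
    exists (a, b); first by [].
    rewrite /F; case: pselect => [hs|nb]; last first.
      exfalso; apply: nb => v /= hv.
      have : `|h v0 - h v| < h v0 - x.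
        apply: hr; apply: rV_norm_lt => // i; rewrite !mxE.
        move: (ha i) (hb i) (hv i); rewrite !in_itv /= => /andP[a1 a2] /andP[b1 b2] /andP[v1 v2].
        rewrite ltr_norml; apply/andP; split.
          have := lt_trans v2 b2; rewrite /v0 mxE; lra.
        have := lt_trans a1 v1; rewrite /v0 mxE; lra.
      rewrite ltr_norml => /andP[_ H]; lra.
    move=> i /=; move: (ha i) (hb i); rewrite !in_itv /= => /andP[_ a2] /andP[b1 _].
    by rewrite /v0 mxE in a2 b1; rewrite a2 b1.
  move=> [ab _]; rewrite /F; case: pselect => // hsub ht.
  rewrite in_itv /= andbT; apply: (hsub (\row_i Z i t)) => i.
  by rewrite mxE; exact: ht.
apply: countable_bigcupT_measurable; first exact: countableP.
move=> ab; rewrite /F; case: pselect => hh /=; last exact: measurable0.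
have -> : [set t | forall i, ratr (ab.1 i) < Z i t < ratr (ab.2 i)] =
   \bigcap_(i in [set: 'I_n]) (Z i @^-1` `](ratr (ab.1 i)), (ratr (ab.2 i))[).
  apply/seteqP; split => t /= ht i.
    move=> _ /=; rewrite in_itv /= ; exact: ht.
  by move: (ht i I); rewrite /= in_itv.
apply: fin_bigcap_measurable; first exact: finite_finset.
move=> i _; rewrite -[X in measurable X]setTI.
by apply: (mZ i) => //.
Qed.
Lemma seq_within (R : realType) n (A : set 'rV[R]_n) (f : 'rV[R]_n -> R) :
  (forall x, A x -> forall u : nat -> 'rV[R]_n, (forall k, A (u k)) ->
     u k @[k --> \oo] --> x -> f (u k) @[k --> \oo] --> f x) ->
  {within A, continuous f}.
Proof.
move=> hs; rewrite continuous_subspace_in => x /set_mem Ax.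
suff H : f @ within A (nbhs x) --> f x.
  by move: H; rewrite nbhs_subspace_in.
apply/cvgrPdist_lt => e e0.
apply: contrapT => hn.
have hk (k : nat) : exists y, [/\ A y, `|x - y| < k.+1%:R^-1 & e <= `|f x - f y|].
  apply: contrapT => hk; apply: hn.
  rewrite /prop_near1 /within /=; apply/nbhs_ballP.
  exists k.+1%:R^-1; first by rewrite /= invr_gt0.
  move=> y /= bxy Ay; rewrite -ball_normE /= in bxy.
  rewrite ltNge; apply/negP => ley; apply: hk; exists y; split => //.
pose u k := projT1 (cid (hk k)).
have hu k : [/\ A (u k), `|x - u k| < k.+1%:R^-1 & e <= `|f x - f (u k)|].
  exact: (projT2 (cid (hk k))).
have ucv : u k @[k --> \oo] --> x.
  apply/cvgrPdist_lt => eps eps0.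
  near=> k.
  have [_ h _] := hu k; apply: (lt_trans h).
  near: k.
  exact: (near_infty_natSinv_lt (PosNum eps0)).
have := hs x Ax u (fun k => let: And3 a _ _ := hu k in a) ucv.
move/cvgrPdist_lt => /(_ e e0) [N _ hN].
have [_ _ h] := hu N.
by move: (hN N (leqnn N)); rewrite ltNge h.
Unshelve. all: by end_near.
Qed.
Lemma gj_of_within (R : realType) n (Lam : set 'rV[R]_n) (g : 'rV[R]_n -> 'rV[R]_n -> R) :
  {within [set z : 'rV[R]_n * 'rV[R]_n | Lam z.1],
     continuous (fun z : 'rV[R]_n * 'rV[R]_n => g z.1 z.2)} ->
  forall l0 v0, Lam l0 -> forall e, 0 < e -> exists2 r, 0 < r &
    forall l v, Lam l -> `|l0 - l| < r -> `|v0 - v| < r -> `|g l0 v0 - g l v| < e.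
Proof.
rewrite continuous_subspace_in => gc l0 v0 Ll0 e e0.
have A0 : [set z : 'rV[R]_n * 'rV[R]_n | Lam z.1] (l0, v0) by [].
have : (fun z : 'rV[R]_n * 'rV[R]_n => g z.1 z.2) @ within [set z : 'rV[R]_n * 'rV[R]_n | Lam z.1] (nbhs (l0, v0)) --> g l0 v0.
  by rewrite (nbhs_subspace_in A0); exact: (gc (l0, v0) (mem_set A0)).
move=> /cvgrPdist_lt /(_ e e0).
move=> /nbhs_ballP [r r0 hr].
exists r => // l v Ll hl hv.
apply: (hr (l, v)) => //.
by split; rewrite -ball_normE /=.
Qed.
Section bdd.
Context (R : realType) d' (U : measurableType d') (mu : {measure set U -> \bar R}).

Lemma bdd_integrable (D : set U) (c : R) (f : U -> R) :
  measurable D -> mu.-integrable D (EFin \o cst c) ->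
  measurable_fun D f -> (forall x, D x -> `|f x| <= c) ->
  mu.-integrable D (EFin \o f).
Proof.
move=> mD ic mf fc.
apply: (le_integrable mD _ _ ic) => //.
  exact/measurable_realfun.measurable_EFinP.
move=> x Dx /=; rewrite lee_fin (ger0_norm (le_trans _ (fc x Dx)))//.
exact: fc.
Qed.

Lemma bdd_fin (D : set U) (c : R) (f : U -> R) :
  measurable D -> mu.-integrable D (EFin \o cst c) ->
  measurable_fun D f -> (forall x, D x -> `|f x| <= c) ->
  (\int[mu]_(x in D) (f x)%:E)%E \is a fin_num.
Proof.
move=> mD ic mf fc; apply: integrable_fin_num => //.
exact: (bdd_integrable _ _ _ mD ic mf fc).
Qed.

Lemma bdd_cvg (D : set U) (c : R) (fk : nat -> U -> R) (f : U -> R) :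
  measurable D -> mu.-integrable D (EFin \o cst c) ->
  (forall k, measurable_fun D (fk k)) -> measurable_fun D f ->
  (forall k x, D x -> `|fk k x| <= c) ->
  (forall x, D x -> fk k x @[k --> \oo] --> f x) ->
  fine (\int[mu]_(x in D) (fk k x)%:E)%E @[k --> \oo] -->
  fine (\int[mu]_(x in D) (f x)%:E)%E.
Proof.
move=> mD ic mfk mf fkc cv.
have cvE : forall x, D x -> (fk k x)%:E @[k --> \oo] --> (f x)%:E.
  by move=> x Dx; apply: cvg_EFin; [exact: nearW|exact: cv].
have [_ _ h] := @dominated_convergence _ _ _ mu D mD (fun k x => (fk k x)%:E)
  (fun x => (f x)%:E) (EFin \o cst c)
  (fun k => proj2 (measurable_realfun.measurable_EFinP _ _) (mfk k))
  (proj2 (measurable_realfun.measurable_EFinP _ _) mf)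
  (aeW _ cvE)
  ic
  (aeW _ (fun x k Dx => (fkc k x Dx))).
apply: fine_cvg.
rewrite fineK; first exact: h.
apply: (bdd_fin _ _ _ mD ic mf) => x Dx.
have cvx : `|fk k x| @[k --> \oo] --> `|f x| by apply: cvg_norm; exact: cv.
have := @closed_cvg _ _ _ _ _ (fun y : R => y <= c) (@closed_le R c) _ _ cvx.
apply; apply: nearW => k; exact: fkc.
Qed.
End bdd.

Section Main.
Context (R : realType) (d : measure_display) (T : measurableType d)
  (P : probability T R) (X : {RV P >-> R}) (n : nat)
  (Xs : 'I_n -> {RV P >-> R}) (Lam : set 'rV[R]_n)
  (g : 'rV[R]_n -> 'rV[R]_n -> R).
Hypothesis gj : forall l0 v0, Lam l0 -> forall e, 0 < e -> exists2 r, 0 < r &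
    forall l v, Lam l -> `|l0 - l| < r -> `|v0 - v| < r -> `|g l0 v0 - g l v| < e.
Hypothesis FXc : continuous (FX X).

Lemma FX01 x : 0 <= FX X x <= 1.
Proof.
rewrite /FX; have := cdf_ge0 X x; have := cdf_le1 X x.
by case: (cdf X x) => //= r; rewrite !lee_fin => -> ->.
Qed.

Lemma mFX : measurable_fun setT (FX X).
Proof. exact: measurable_realfun.continuous_measurable_fun. Qed.

Lemma mXhat l : Lam l -> measurable_fun setT (Xhat g Xs l).
Proof.
move=> Ll; rewrite /Xhat /vecX.
apply: (meas_comp_vec _ _ _ _ (fun i => Xs i) (g l)).
  by move=> i; exact: measurable_funPT.
move=> v0 e e0; have [r r0 hr] := gj l v0 Ll e e0.
by exists r => // v hv; apply: hr => //; rewrite subrr normr0.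
Qed.

Lemma ucvg (u : nat -> 'rV[R]_n) l0 : Lam l0 -> (forall k, Lam (u k)) ->
  u k @[k --> \oo] --> l0 ->
  forall t, Xhat g Xs (u k) t @[k --> \oo] --> Xhat g Xs l0 t.
Proof.
move=> Ll0 Lu ucv t; apply/cvgrPdist_lt => e e0.
have [r r0 hr] := gj l0 (vecX Xs t) Ll0 e e0.
move/cvgrPdist_lt: ucv => /(_ r r0); apply: filterS => k hk.
by rewrite /Xhat; apply: hr => //; rewrite subrr normr0.
Qed.


Let h1 l t := FX X (Num.max (X t) (Xhat g Xs l t)).
Let h0 l t := FX X (Xhat g Xs l t).

Lemma mh1 l : Lam l -> measurable_fun setT (h1 l).
Proof.
move=> Ll; apply: measurableT_comp; first exact: mFX.
exact: (measurable_realfun.measurable_maxr (measurable_funPT X) (mXhat l Ll)).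
Qed.

Lemma mh0 l : Lam l -> measurable_fun setT (h0 l).
Proof. by move=> Ll; apply: measurableT_comp; [exact: mFX|exact: mXhat]. Qed.

Lemma icst1 : P.-integrable setT (EFin \o cst (1 : R)).
Proof. exact: finite_measure_integrable_cst. Qed.

Lemma FXn1 x : `|FX X x| <= 1.
Proof. by have /andP[a0 a1] := FX01 x; rewrite ger0_norm. Qed.

Lemma J1E l : Lam l -> J1 X Xs g l = (fine (J1 X Xs g l))%:E.
Proof.
move=> Ll; rewrite fineK // /J1 unlock.
exact: (bdd_fin _ _ _ _ _ _ _ measurableT icst1 (mh1 l Ll) (fun x _ => FXn1 _)).
Qed.

Lemma J0E l : Lam l -> J0 X Xs g l = (fine (J0 X Xs g l))%:E.
Proof.
move=> Ll; rewrite fineK // /J0 unlock.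
exact: (bdd_fin _ _ _ _ _ _ _ measurableT icst1 (mh0 l Ll) (fun x _ => FXn1 _)).
Qed.

Lemma J1cv (u : nat -> 'rV[R]_n) l0 : Lam l0 -> (forall k, Lam (u k)) ->
  u k @[k --> \oo] --> l0 ->
  fine (J1 X Xs g (u k)) @[k --> \oo] --> fine (J1 X Xs g l0).
Proof.
move=> Ll0 Lu ucv; rewrite /J1 unlock.
apply: (bdd_cvg _ _ _ _ _ _ _ _ measurableT icst1 (fun k => mh1 (u k) (Lu k)) (mh1 l0 Ll0)
   (fun k x _ => FXn1 _)).
move=> t _.
have cf : continuous (fun y => FX X (Num.max (X t) y)).
  move=> y; apply: continuous_comp; last exact: FXc.
  by apply: max_fun_continuous; [exact: cst_continuous|move=> z; exact: cvg_id].
exact: (continuous_cvg _ (cf _) (ucvg u l0 Ll0 Lu ucv t)).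
Qed.

Lemma J0cv (u : nat -> 'rV[R]_n) l0 : Lam l0 -> (forall k, Lam (u k)) ->
  u k @[k --> \oo] --> l0 ->
  fine (J0 X Xs g (u k)) @[k --> \oo] --> fine (J0 X Xs g l0).
Proof.
move=> Ll0 Lu ucv; rewrite /J0 unlock.
apply: (bdd_cvg _ _ _ _ _ _ _ _ measurableT icst1 (fun k => mh0 (u k) (Lu k)) (mh0 l0 Ll0)
   (fun k x _ => FXn1 _)).
move=> t _.
exact: (continuous_cvg _ (FXc _) (ucvg u l0 Ll0 Lu ucv t)).
Qed.


Lemma part1 : Lambda_g X Xs Lam g !=set0 -> compact (Lambda_g X Xs Lam g) ->
  exists2 l, Lambda_g X Xs Lam g l &
    forall m, Lambda_g X Xs Lam g m -> (J1 X Xs g l <= J1 X Xs g m)%E.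
Proof.
move=> S0 cS.
have SL : Lambda_g X Xs Lam g `<=` Lam by move=> l [].
have cf : {within Lambda_g X Xs Lam g, continuous (fun l => fine (J1 X Xs g l))}.
  apply: seq_within => x Sx u Su ucv.
  exact: J1cv (SL _ Sx) (fun k => SL _ (Su k)) ucv.
have [c /set_mem Sc hc] := EVT_min_rV S0 cS cf.
exists c => // m Sm.
rewrite (J1E c (SL _ Sc)) (J1E m (SL _ Sm)) lee_fin.
exact: hc (mem_set Sm).
Qed.

Section dens.
Variable p : 'rV[R]_n -> R -> R.
Hypothesis hp : forall l, Lam l -> is_density P (Xhat g Xs l) (p l).
Hypothesis hL1 : forall l0, Lam l0 -> forall e : R, 0 < e ->
  exists2 delta : R, 0 < delta &
    forall l, Lam l -> `|l - l0| < delta ->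
      (\int[lebesgue_measure]_y (`|p l y - p l0 y|)%:E < e%:E)%E.

Let Ay (y : R) := FX X @^-1` `]-oo, y].

Lemma mAy y : measurable (Ay y).
Proof. by rewrite -(setTI (Ay y)); apply: mFX => //; exact: measurable_itv. Qed.

Lemma mpre l y : Lam l -> measurable (Xhat g Xs l @^-1` Ay y).
Proof. by move=> Ll; rewrite -(setTI (_ @^-1` _)); apply: (mXhat l Ll) => //; exact: mAy. Qed.

Lemma FY1P l y : Lam l -> (FY1 X Xs g l y)%:E = P (Xhat g Xs l @^-1` Ay y).
Proof.
move=> Ll; rewrite /FY1 /cdfR.
have -> : [set t | FX X (Xhat g Xs l t) <= y] = Xhat g Xs l @^-1` Ay y.
  by apply/seteqP; split => t; rewrite /Ay /= in_itv /=.
rewrite fineK // ge0_fin_numE ?measure_ge0//.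
by rewrite (le_lt_trans (probability_le1 _ (mpre l y Ll))) ?ltry.
Qed.

Lemma FY1E l y : Lam l ->
  (FY1 X Xs g l y)%:E = (\int[lebesgue_measure]_(z in Ay y) (p l z)%:E)%E.
Proof.
move=> Ll; rewrite FY1P //; have [_ [_ hd]] := hp l Ll.
exact: hd (mAy y).
Qed.

Lemma FY101 l y : Lam l -> 0 <= FY1 X Xs g l y <= 1.
Proof.
move=> Ll; have := FY1P l y Ll.
have b0 := measure_ge0 P (Xhat g Xs l @^-1` Ay y).
have b1 := probability_le1 P (mpre l y Ll).
by move=> e; rewrite -!lee_fin e b0 b1.
Qed.

Lemma ip l A : Lam l -> measurable A ->
  lebesgue_measure.-integrable A (EFin \o p l).
Proof.
move=> Ll mA; have [p0 [mp hd]] := hp l Ll.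
apply/integrableP; split.
  by apply/measurable_realfun.measurable_EFinP; exact: measurable_funS mp.
under eq_integral do rewrite /= ger0_norm //.
rewrite -hd //.
have mA' : measurable (Xhat g Xs l @^-1` A).
  by rewrite -(setTI (_ @^-1` _)); apply: (mXhat l Ll).
by rewrite (le_lt_trans (probability_le1 _ mA')) ?ltry.
Qed.


Lemma FY1bd l l0 y : Lam l -> Lam l0 ->
  (`|FY1 X Xs g l y - FY1 X Xs g l0 y|%:E <=
   \int[lebesgue_measure]_z (`|p l z - p l0 z|)%:E)%E.
Proof.
move=> Ll Ll0.
have [_ [mp _]] := hp l Ll; have [_ [mp0 _]] := hp l0 Ll0.
change (`|((FY1 X Xs g l y)%:E - (FY1 X Xs g l0 y)%:E)%E| <=
   \int[lebesgue_measure]_z (`|p l z - p l0 z|)%:E)%E.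
rewrite !FY1E // -integralB_EFin //; [|exact: mAy|exact: ip (mAy y)|exact: ip (mAy y)].
apply: le_trans; first apply: le_abse_integral; first exact: mAy.
  apply/measurable_realfun.measurable_EFinP; apply: measurable_funS (measurable_realfun.measurable_funB mp mp0) => //.
apply: ge0_subset_integral => //; first exact: mAy.
by apply/measurable_realfun.measurable_EFinP; apply: measurableT_comp => //; exact: measurable_realfun.measurable_funB.
Qed.

Lemma FY1cv (u : nat -> 'rV[R]_n) l0 y : Lam l0 -> (forall k, Lam (u k)) ->
  u k @[k --> \oo] --> l0 ->
  FY1 X Xs g (u k) y @[k --> \oo] --> FY1 X Xs g l0 y.
Proof.
move=> Ll0 Lu ucv; apply/cvgrPdist_lt => e e0.
have [dl dl0 hd] := hL1 l0 Ll0 e e0.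
move/cvgrPdist_lt: ucv => /(_ dl dl0); apply: filterS => k hk.
rewrite distrC -lte_fin; apply: le_lt_trans (FY1bd (u k) l0 y (Lu k) Ll0) _.
by apply: hd => //; rewrite distrC.
Qed.

Lemma mFY1 l : Lam l -> measurable_fun setT (FY1 X Xs g l).
Proof.
move=> Ll; apply: measurable_realfun.nondecreasing_measurable => // y y' yy'.
rewrite -lee_fin !FY1E //.
apply: ge0_subset_integral => //; [exact: mAy|exact: mAy| | |].
- have [_ [mp _]] := hp l Ll.
  by apply/measurable_realfun.measurable_EFinP; exact: measurable_funS mp.
- by move=> z _; rewrite lee_fin; have [p0 _] := hp l Ll.
- by move=> z; rewrite /Ay /= !in_itv /= => /le_trans; apply.
Qed.

Let q l (y : R) := FY1 X Xs g l y * (FY1 X Xs g l y - 2 * y).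

Lemma icst2 : lebesgue_measure.-integrable `[0%R, 1%R] (EFin \o cst (2 : R)).
Proof.
apply/integrableP; split; first exact/measurable_realfun.measurable_EFinP.
under eq_integral do rewrite /= ger0_norm //.
rewrite integral_cst //= lebesgue_measure_itv /= lte01 /=.
by rewrite oppr0 -EFinD -EFinM ltry.
Qed.

Lemma mq l : Lam l ->
  measurable_fun (T := measurableTypeR R) (U := R) (`[0%R, 1%R]%classic) (q l).
Proof.
move=> Ll.
suff H : measurable_fun (`[0%R, 1%R]%classic : set R) (q l) by exact: H.
apply: (measurable_funS measurableT) => //.
apply: measurable_realfun.measurable_funM; first exact: mFY1.
apply: measurable_realfun.measurable_funB; first exact: mFY1.
exact: measurable_realfun.measurable_funM.
Qed.

Lemma qbd l (y : R) : Lam l -> (`[0%R, 1%R]%classic : set R) y -> `|q l y| <= 2.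
Proof.
move=> Ll; rewrite /= in_itv /= => /andP[y0 y1].
have /andP[f0 f1] := FY101 l y Ll.
rewrite /q ler_norml; apply/andP; split; nra.
Qed.

Lemma HE l : Lam l ->
  (\int[lebesgue_measure]_(y in `[0%R, 1%R])
     (FY1 X Xs g l y * (FY1 X Xs g l y - 2 * y))%:E)%E =
  (fine (\int[lebesgue_measure]_(y in `[0%R, 1%R])
     (FY1 X Xs g l y * (FY1 X Xs g l y - 2 * y))%:E)%E)%:E.
Proof.
move=> Ll; rewrite fineK //.
apply: (@bdd_fin R _ (measurableTypeR R) lebesgue_measure _ 2 (q l) _ icst2 (mq l Ll) (fun y hy => qbd l y Ll hy)).
have H : measurable (`[0%R, 1%R]%classic : set R) := measurable_itv _.
exact: H.
Qed.

Lemma Hcv (u : nat -> 'rV[R]_n) l0 : Lam l0 -> (forall k, Lam (u k)) ->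
  u k @[k --> \oo] --> l0 ->
  fine (\int[lebesgue_measure]_(y in `[0%R, 1%R])
     (FY1 X Xs g (u k) y * (FY1 X Xs g (u k) y - 2 * y))%:E)%E @[k --> \oo] -->
  fine (\int[lebesgue_measure]_(y in `[0%R, 1%R])
     (FY1 X Xs g l0 y * (FY1 X Xs g l0 y - 2 * y))%:E)%E.
Proof.
move=> Ll0 Lu ucv.
apply: (@bdd_cvg R _ (measurableTypeR R) lebesgue_measure _ 2 (fun k => q (u k)) (q l0) _ icst2
  (fun k => mq (u k) (Lu k)) (mq l0 Ll0) (fun k y hy => qbd (u k) y (Lu k) hy)).
  have H : measurable (`[0%R, 1%R]%classic : set R) := measurable_itv _.
  exact: H.
move=> y _; rewrite /q.
have h := FY1cv u l0 y Ll0 Lu ucv.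
apply: cvgM => //; apply: cvgB => //; exact: cvg_cst.
Qed.

Variable gamma : R.

Lemma part2 : Lam !=set0 -> compact Lam ->
  (exists2 l, Lam l & forall m, Lam m -> (J2 X Xs g l <= J2 X Xs g m)%E) /\
  (exists2 l, Lam l & forall m, Lam m ->
     (J3 gamma X Xs g l <= J3 gamma X Xs g m)%E).
Proof.
move=> L0 cL.
pose f2 l := 2 * fine (J1 X Xs g l) - fine (J0 X Xs g l).
pose f3 l := f2 l + gamma * fine (\int[lebesgue_measure]_(y in `[0%R, 1%R])
     (FY1 X Xs g l y * (FY1 X Xs g l y - 2 * y))%:E)%E.
have J2f l : Lam l -> J2 X Xs g l = (f2 l)%:E.
  by move=> Ll; rewrite /J2 (J1E l Ll) (J0E l Ll) EFinB EFinM.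
have J3f l : Lam l -> J3 gamma X Xs g l = (f3 l)%:E.
  by move=> Ll; rewrite /J3 (J2f l Ll) (HE l Ll) EFinD EFinM.
have c2 u l0 : Lam l0 -> (forall k, Lam (u k)) -> u k @[k --> \oo] --> l0 ->
    f2 (u k) @[k --> \oo] --> f2 l0.
  move=> Ll0 Lu ucv; apply: cvgB; last exact: J0cv.
  by apply: cvgM; [exact: cvg_cst|exact: J1cv].
split.
  have cf : {within Lam, continuous f2}.
    by apply: seq_within => x Lx u Lu ucv; exact: c2.
  have [c /set_mem Lc hc] := EVT_min_rV L0 cL cf.
  exists c => // m Lm; rewrite (J2f c Lc) (J2f m Lm) lee_fin.
  exact: hc (mem_set Lm).
have cf : {within Lam, continuous f3}.
  apply: seq_within => x Lx u Lu ucv.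
  apply: cvgD; first exact: c2.
  by apply: cvgM; [exact: cvg_cst|exact: Hcv].
have [c /set_mem Lc hc] := EVT_min_rV L0 cL cf.
exists c => // m Lm; rewrite (J3f c Lc) (J3f m Lm) lee_fin.
exact: hc (mem_set Lm).
Qed.

End dens.

End Main.

Theorem mainTheorem10 (R : realType) (d : measure_display)
  (T : measurableType d) (P : probability T R)
  (X : {RV P >-> R}) (n : nat) (Xs : 'I_n -> {RV P >-> R})
  (Lam : set 'rV[R]_n) (g : 'rV[R]_n -> 'rV[R]_n -> R) (gamma : R) :
  {within [set z : 'rV[R]_n * 'rV[R]_n | Lam z.1],
     continuous (fun z : 'rV[R]_n * 'rV[R]_n => g z.1 z.2)} ->
  continuous (FX X) ->
  (forall x y, support_of P X x -> support_of P X y -> x < y ->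
     FX X x < FX X y) ->
  0 < gamma ->
  abs_cont_law P (jointX X Xs) ->
  ((Lambda_g X Xs Lam g !=set0 ->
    compact (Lambda_g X Xs Lam g) ->
    diag_unif_cont X Xs g (Lambda_g X Xs Lam g) ->
    exists2 l, Lambda_g X Xs Lam g l &
      forall m, Lambda_g X Xs Lam g m -> (J1 X Xs g l <= J1 X Xs g m)%E)
  /\
   (Lam !=set0 -> compact Lam -> diag_unif_cont X Xs g Lam ->
    forall p : 'rV[R]_n -> R -> R,
    (forall l, Lam l -> is_density P (Xhat g Xs l) (p l)) ->
    (forall l0, Lam l0 -> forall e : R, 0 < e ->
       exists2 delta : R, 0 < delta &
         forall l, Lam l -> `|l - l0| < delta ->
           (\int[lebesgue_measure]_y (`|p l y - p l0 y|)%:E < e%:E)%E) ->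
    (exists2 l, Lam l &
       forall m, Lam m -> (J2 X Xs g l <= J2 X Xs g m)%E) /\
    (exists2 l, Lam l &
       forall m, Lam m -> (J3 gamma X Xs g l <= J3 gamma X Xs g m)%E))).
Proof.
move=> gc FXc _ _ _.
have gj := gj_of_within _ _ _ _ gc.
split.
  move=> S0 cS _.
  exact: (part1 _ _ _ _ _ _ _ _ _ gj FXc S0 cS).
move=> L0 cL _ p hp hL1.
exact: (part2 _ _ _ _ _ _ _ _ _ gj FXc _ hp hL1 gamma L0 cL).
Qed.
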